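(* Let $\pi:\mathbf H_o\to\mathbf{WQSym}$ be the projection $\mathcal F\mapsto\pi(S'^{\mathcal F})$ induced by $a_{ij}\mapsto x_j$ on the second realization, and $\iota:\mathbf H_{NCK}\to\mathbf H_o$ the embedding by canonical (preorder) labelling. Then $\pi\circ\iota$ is injective; i.e., the elements $\pi(S'^{\iota(\overline{\mathcal F})})=\sum_u\mathbf M_u$ (sum over packed words $u$ with $u_k<u_l$ whenever $k$ is the parent of $l$ in $\iota(\overline{\mathcal F})$), for $\overline{\mathcal F}$ ranging over plane forests, are linearly independent in $\mathbf{WQSym}$.
   Context: A plane forest is a finite sequence of plane trees (rooted trees whose children are linearly ordered); $\mathbf H_{NCK}$ is the vector space (noncommutative Connes–Kreimer Hopf algebra) with basis the plane forests. For a plane forest $\overline{\mathcal F}$ with $n$ vertices, $\iota(\overline{\mathcal F})$ is the rooted forest on vertex set $[n]$ obtained by numbering the vertices in order of first visit in a left depth-first traversal of the trees from left to right. $\mathbf H_o$ is the Hopf algebra with basis ordered forests (rooted forests on vertex set $[n]$, labels arbitrary). Second realization: over $A'=\{a_{ij}:1\le i\le j\}$ with $a_{hi}\prec a_{ij}$ for $h\le i<j$, $S'^{\mathcal F}$ is the sum of words $w_1\cdots w_n$ with $w_k$ a diagonal letter $a_{ii}$ for each root $k$ and $w_k\prec w_l$ whenever $k$ is the parent of $l$. $\pi$ is the algebra morphism $a_{ij}\mapsto x_j$ into series over $X=\{x_1<x_2<\cdots\}$. A word over positive integers is packed if its set of letters is $\{1,\dots,m\}$; $\mathrm{pack}(w)$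 replaces the $r$-th smallest letter by $r$; $\mathbf M_u=\sum_{\mathrm{pack}(w)=u}w$, and $\mathbf{WQSym}$ is the span of the $\mathbf M_u$. *)

(* Defs.v *)
From mathcomp Require Import all_boot all_order all_algebra.
Set Implicit Arguments. Unset Strict Implicit. Unset Printing Implicit Defensive.
Import GRing.Theory.

Inductive ptree : Type := PNode of seq ptree.
Definition pforest := seq ptree.

Fixpoint tsize (t : ptree) : nat :=
  let: PNode ch := t in (foldr (fun t' n => tsize t' + n) 0 ch).+1.
Definition fsize (f : pforest) : nat := foldr (fun t n => tsize t + n) 0 f.

(* The canonical labelling iota: vertices are numbered (0-based here, i.e.
   label k+1 of the paper is position k) in order of first visit of a left
   depth-first traversal of the trees from left to right.  [tpar t p o]
   lists, in that order, the parent of each vertex of t (None for a root),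
   where t's root receives number o and has parent p. *)
Fixpoint tpar (t : ptree) (p : option nat) (o : nat) : seq (option nat) :=
  let: PNode ch := t in
  p :: (fix fpar (ts : seq ptree) (o' : nat) : seq (option nat) :=
          match ts with
          | [::] => [::]
          | t' :: ts' => let s := tpar t' (Some o) o' in s ++ fpar ts' (o' + size s)
          end) ch o.+1.

Fixpoint fpar_from (f : pforest) (o : nat) : seq (option nat) :=
  match f with
  | [::] => [::]
  | t :: f' => let s := tpar t None o in s ++ fpar_from f' (o + size s)
  end.

Definition iota_par (f : pforest) : seq (option nat) := fpar_from f 0.

Definition pack (w : seq nat) : seq nat :=
  [seq (size (undup [seq y <- w | y < x])).+1 | x <- w].

Definition is_packed (u : seq nat) : bool :=
  all (fun k => k \in u) (iota 1 (foldr maxn 0 u)) && all (fun k => 0 < k) u.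

Definition incr_on (f : pforest) (u : seq nat) : bool :=
  [forall k : 'I_(size (iota_par f)),
     if nth None (iota_par f) k is Some p then nth 0 u p < nth 0 u k else true].

(* Coefficient of the word w (over X = {x_1 < x_2 < ...}, x_i identified
   with i > 0) in  pi(S'^{iota(f)}) = sum_u M_u, the sum ranging over packed
   words u of length n = |f| with u_p < u_k whenever p is the parent of k,
   and M_u = sum_{pack w = u} w.  Since pack w is packed for every nonempty
   positive word, the coefficient of w is the indicator below. *)
Definition piota (K : fieldType) (f : pforest) (w : seq nat) : K :=
  if [&& all (fun k => 0 < k) w, size w == fsize f,
         is_packed (pack w) & incr_on f (pack w)] then 1%R else 0%R.

(* Main.v *)
Require Import Defs.
From mathcomp Require Import all_boot all_order all_algebra.
Import GRing.Theory.
Import Defs.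
From Stdlib Require Import Lia.
Set Implicit Arguments. Unset Strict Implicit.
Ltac tolia := repeat match goal with
 | H : is_true (_ && _) |- _ => let H1 := fresh in let H2 := fresh in destruct (andP H) as [H1 H2]; clear H
 | H : is_true (_ <= _) |- _ => let H1 := fresh in have H1 := elimT leP H; clear H
 | H : is_true (_ < _) |- _ => let H1 := fresh in have H1 := elimT ltP H; clear H
 | H : is_true (_ == _) |- _ => let H1 := fresh in have H1 := elimT eqP H; clear H
 | |- is_true (_ && _) => apply/andP; split
 | |- is_true (_ <= _) => apply/leP
 | |- is_true (_ < _) => apply/ltP
 | H : context [addn _ _] |- _ => rewrite -plusE in H
 | H : context [subn _ _] |- _ => rewrite -minusE in H
 | H : context [muln _ _] |- _ => rewrite -multE in H
 | |- context [addn _ _] => rewrite -plusE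
 | |- context [subn _ _] => rewrite -minusE
 | |- context [muln _ _] => rewrite -multE
 end; lia.

Fixpoint tdep (t : ptree) (d : nat) : seq nat :=
  let: PNode ch := t in d :: flatten (map (fun c => tdep c d.+1) ch).
Definition fdep (d : nat) (f : seq ptree) := flatten (map (fun t => tdep t d) f).

Lemma tdepE ch d : tdep (PNode ch) d = d :: fdep d.+1 ch.
Proof. by []. Qed.

Fixpoint fparch (o : nat) (ts : seq ptree) (o' : nat) : seq (option nat) :=
  match ts with
  | [::] => [::]
  | t' :: ts' => let s := tpar t' (Some o) o' in s ++ fparch o ts' (o' + size s)
  end.

Lemma tparE ch p o : tpar (PNode ch) p o = p :: fparch o ch o.+1.
Proof.
rewrite /=; congr (_ :: _); elim: ch o.+1 => //= t ts IH o'; by rewrite IH.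
Qed.

Definition ptree_rect2 (P : ptree -> Type) (Q : seq ptree -> Type)
  (Hnil : Q [::]) (Hcons : forall t ts, P t -> Q ts -> Q (t :: ts))
  (Hnode : forall ts, Q ts -> P (PNode ts)) : forall t, P t :=
  fix F (t : ptree) : P t := match t with PNode ts => Hnode ts
    ((fix G (ts : seq ptree) : Q ts := match ts return Q ts with [::] => Hnil
       | t :: ts' => Hcons t ts' (F t) (G ts') end) ts) end.

Definition chsize (ts : seq ptree) := foldr (fun t' n => tsize t' + n) 0 ts.

Lemma size_tdep t d : size (tdep t d) = tsize t.
Proof.
move: t d; apply: (@ptree_rect2 (fun t => forall d, size (tdep t d) = tsize t)
   (fun ts => forall d, size (fdep d ts) = chsize ts)).
- by [].
- by move=> t ts IHt IHts d; rewrite /fdep /= size_cat IHt -/(fdep _ _) IHts.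
- by move=> ts IH d; rewrite tdepE /= IH.
Qed.

Lemma size_fdep f d : size (fdep d f) = fsize f.
Proof. by elim: f => //= t f IH; rewrite size_cat size_tdep IH. Qed.

Definition TL t := forall p o d,
  size (tpar t p o) = size (tdep t d) /\ nth None (tpar t p o) 0 = p /\
  nth 0 (tdep t d) 0 = d /\
  forall i, 0 < i < size (tpar t p o) -> exists q, nth None (tpar t p o) i = Some q /\
     o <= q < o + i /\ (nth 0 (tdep t d) (q - o)).+1 = nth 0 (tdep t d) i.

Definition FL ts := forall o o' d,
  size (fparch o ts o') = size (fdep d.+1 ts) /\
  forall i, i < size (fparch o ts o') -> exists q, nth None (fparch o ts o') i = Some q /\
   ((q = o /\ nth 0 (fdep d.+1 ts) i = d.+1) \/
    (o' <= q < o' + i /\ (nth 0 (fdep d.+1 ts) (q - o')).+1 = nth 0 (fdep d.+1 ts) i)).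

Lemma TL_all t : TL t.
Proof.
move: t; apply: (@ptree_rect2 TL FL).
- by move=> o o' d; split => // i.
- move=> t ts IHt IHts o o' d.
  have [Hs [H0 [He0 Hi]]] := IHt (Some o) o' d.+1.
  set s1 := tpar t (Some o) o'.
  rewrite -/s1 in Hs H0 Hi.
  have [Hs2 Hi2] := IHts o (o' + size s1) d.
  have -> : fparch o (t :: ts) o' = s1 ++ fparch o ts (o' + size s1) by [].
  have -> : fdep d.+1 (t :: ts) = tdep t d.+1 ++ fdep d.+1 ts by [].
  split; first by rewrite !size_cat Hs2 Hs.
  move=> i; rewrite size_cat => Hi'.
  case: (ltnP i (size s1)) => His.
  + rewrite nth_cat His.
    case: i Hi' His => [|i] Hi' His.
    * exists o; split => //; left; by rewrite nth_cat -Hs His He0.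
    * have [q [Hq1 [Hq2 Hq3]]] := Hi i.+1 His.
      exists q; split => //; right; split => //.
      rewrite !nth_cat -Hs His.
      have -> : q - o' < size s1 by tolia.
      done.
  + rewrite nth_cat ltnNge His /=.
    have Hj : i - size s1 < size (fparch o ts (o' + size s1)) by tolia.
    have [q [Hq1 Hq2]] := Hi2 _ Hj.
    exists q; split => //.
    rewrite !nth_cat -Hs ltnNge His /=.
    case: Hq2 => [[-> ->]|[Hq2 Hq3]]; first by left.
    right; split; first by tolia.
    have -> : q - o' < size s1 = false by apply/negbTE; rewrite -leqNgt; tolia.
    by rewrite -Hq3 subnDA.
- move=> ts IH p o d.
  have [Hs Hi] := IH o o.+1 d.
  rewrite tparE tdepE /=.
  split; first by rewrite Hs.
  split => //; split => //.
  case=> [|i]; first by [].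
  move=> /andP [_ Hi']; have [q [Hq1 Hq2]] := Hi i Hi'.
  exists q; split => //.
  case: Hq2 => [[-> Hd]|[Hq2 Hq3]]; first by rewrite subnn /= Hd; split => //; tolia.
  split; first by tolia.
  have -> : q - o = (q - o.+1).+1 by tolia.
  done.
Qed.

Lemma FF_all f o : size (fpar_from f o) = size (fdep 0 f) /\
  forall i, i < size (fpar_from f o) ->
   match nth None (fpar_from f o) i with
   | None => nth 0 (fdep 0 f) i = 0
   | Some q => o <= q < o + i /\ (nth 0 (fdep 0 f) (q - o)).+1 = nth 0 (fdep 0 f) i
   end.
Proof.
elim: f o => [|t f IH] o; first by split => // i.
have [Hs [H0 [He0 Hi]]] := TL_all t None o 0.
set s1 := tpar t None o.
rewrite -/s1 in Hs H0 Hi.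
have [Hs2 Hi2] := IH (o + size s1).
have -> : fpar_from (t :: f) o = s1 ++ fpar_from f (o + size s1) by [].
have -> : fdep 0 (t :: f) = tdep t 0 ++ fdep 0 f by [].
split; first by rewrite !size_cat Hs2 Hs.
move=> i; rewrite size_cat => Hi'.
case: (ltnP i (size s1)) => His.
- rewrite !nth_cat -Hs His.
  case: i Hi' His => [|i] Hi' His; first by rewrite H0.
  have [q [Hq1 [Hq2 Hq3]]] := Hi i.+1 His.
  rewrite Hq1; split => //.
  rewrite nth_cat -Hs.
  have -> : q - o < size s1 by tolia.
  done.
- rewrite !nth_cat -Hs ltnNge His /=.
  have Hj : i - size s1 < size (fpar_from f (o + size s1)) by tolia.
  have := Hi2 _ Hj.
  case: (nth None _ _) => // q [Hq2 Hq3].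
  split; first by tolia.
  rewrite nth_cat -Hs.
  have -> : (q - o < size s1) = false by apply/negbTE; rewrite -leqNgt; tolia.
  by rewrite -Hq3 subnDA.
Qed.

Definition Df f := fdep 0 f.
Definition wf f := map S (Df f).

Lemma size_iota_par f : size (iota_par f) = size (Df f).
Proof. by have [H _] := FF_all f 0. Qed.

Lemma link f k : k < size (Df f) ->
  match nth None (iota_par f) k with
  | None => nth 0 (Df f) k = 0
  | Some q => q < k /\ (nth 0 (Df f) q).+1 = nth 0 (Df f) k end.
Proof.
move=> Hk; have [Hs H] := FF_all f 0.
have := H k; rewrite /iota_par Hs => /(_ Hk).
case: (nth None _ _) => // q [/andP [_ Hq] Hq2]; split => //.
by rewrite -Hq2 subn0.
Qed.
Arguments link {f k}.

Lemma down f x : x \in wf f -> 1 < x -> x.-1 \in wf f.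
Proof.
case/mapP => y /(nthP 0) [k Hk <-] -> /=; rewrite ltnS => Hpos.
have := link Hk; case: (nth None _ _) => [q [Hqk Hq]|H0]; last by rewrite H0 in Hpos.
rewrite -Hq; apply: map_f; apply: mem_nth; by apply: ltn_trans Hk.
Qed.
Arguments down {f x}.

Lemma maxn_ge x w : x \in w -> x <= foldr maxn 0 w.
Proof.
elim: w => //= a w IH; rewrite in_cons => /orP [/eqP ->|H]; first exact: leq_maxl.
by rewrite leq_max IH ?orbT.
Qed.

Lemma maxn_ex k w : 0 < k -> k <= foldr maxn 0 w -> exists2 x, x \in w & k <= x.
Proof.
move=> Hk; elim: w => [|a w IH] /=; first by rewrite leqNgt Hk.
rewrite leq_max => /orP [H|H]; first by exists a; rewrite ?mem_head.
by have [x Hx Hkx] := IH H; exists x; rewrite ?in_cons ?Hx ?orbT.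
Qed.

Lemma pos_wf f : all (fun k => 0 < k) (wf f).
Proof. by apply/allP => x /mapP [y _ ->]. Qed.

Lemma downclosed f x : x \in wf f -> forall k, 0 < k -> k <= x -> k \in wf f.
Proof.
elim: x => [|x IH] Hx k Hk Hkx; first by rewrite leqNgt Hk in Hkx.
case: (ltngtP k x.+1) => Hkx'; last by rewrite Hkx'.
- apply: IH; last by rewrite -ltnS.
  + have := down Hx; apply; by apply: leq_ltn_trans Hkx'.
  + done.
- by rewrite ltnNge Hkx in Hkx'.
Qed.

Lemma packed_wf f : is_packed (wf f).
Proof.
rewrite /is_packed pos_wf andbT; apply/allP => k; rewrite mem_iota => /andP [Hk1 Hk2].
rewrite add1n ltnS in Hk2.
have [x Hx Hkx] := maxn_ex Hk1 Hk2.
exact: downclosed Hx _ Hk1 Hkx.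
Qed.

Lemma pack_id w : is_packed w -> pack w = w.
Proof.
move=> /andP [/allP Hp /allP Hpos].
rewrite /pack -[RHS]map_id; apply/eq_in_map => x Hx /=.
have Hx0 := Hpos x Hx.
have Hperm : perm_eq (undup [seq y <- w | y < x]) (iota 1 x.-1).
  apply: uniq_perm; [exact: undup_uniq| exact: iota_uniq|] => y.
  rewrite mem_undup mem_filter mem_iota add1n prednK //.
  apply/idP/idP => [/andP [Hyx Hy]|/andP [Hy1 Hyx]].
  - by rewrite Hyx Hpos.
  - rewrite Hyx /=; apply: Hp; rewrite mem_iota add1n ltnS Hy1 /=.
    apply: leq_trans (maxn_ge Hx); exact: ltnW.
by rewrite (perm_size Hperm) size_iota prednK.
Qed.

Lemma pack_wf f : pack (wf f) = wf f.
Proof. exact/pack_id/packed_wf. Qed.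

Lemma incr_wf f : incr_on f (wf f).
Proof.
apply/forallP => -[k Hk] /=; rewrite size_iota_par in Hk.
have := link Hk; case: (nth None _ _) => // q [Hqk Hq].
rewrite /wf !(nth_map 0) ?ltnS -?Hq //; exact: ltn_trans Hk.
Qed.

Lemma piota_self (K : fieldType) f : piota K f (wf f) = 1%R.
Proof.
by rewrite /piota pos_wf size_map size_fdep eqxx pack_wf packed_wf incr_wf.
Qed.

Lemma dominate f g : size (Df g) = size (Df f) -> incr_on g (wf f) ->
  forall k, k < size (Df f) -> nth 0 (Df g) k <= nth 0 (Df f) k.
Proof.
move=> Hs /forallP Hinc k.
elim: k {-2}k (leqnn k) => [|m IH] k Hkm Hk;
  have Hk' : k < size (Df g) by rewrite Hs.
- have := link Hk'; case: (nth None _ _) => [q [Hqk _]|-> //].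
  by move: (leq_trans Hqk Hkm).
- have := link Hk'; case E: (nth None (iota_par g) k) => [q|]; last by move=> ->.
  case=> Hqk Hq.
  have Hk'' : k < size (iota_par g) by rewrite size_iota_par.
  have := Hinc (Ordinal Hk''); rewrite /= E.
  have Hqf : q < size (Df f) by apply: ltn_trans Hk.
  rewrite /wf !(nth_map 0) // ltnS => Hlt.
  rewrite -Hq; apply: leq_ltn_trans Hlt.
  apply: IH => //; rewrite -ltnS; exact: leq_trans Hqk Hkm.
Qed.

Lemma sumn_le s t : size s = size t ->
  (forall k, k < size s -> nth 0 s k <= nth 0 t k) -> sumn s <= sumn t.
Proof.
elim: s t => [|a s IH] [|b t] //= [Hs] H.
apply: leq_add; first exact: (H 0).
apply: IH => // k Hk; exact: (H k.+1).
Qed.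

Lemma sumn_eq s t : size s = size t ->
  (forall k, k < size s -> nth 0 s k <= nth 0 t k) -> sumn t <= sumn s -> s = t.
Proof.
elim: s t => [|a s IH] [|b t] //= [Hs] H Hsum.
have Hab : a <= b by exact: (H 0).
have Hst : forall k, k < size s -> nth 0 s k <= nth 0 t k by move=> k Hk; exact: (H k.+1).
have Hle := sumn_le Hs Hst.
have Heq : a = b /\ sumn t <= sumn s by split; tolia.
case: Heq => -> Ht; congr (_ :: _); exact: IH.
Qed.

Lemma tdep_ge t d : all (leq d) (tdep t d).
Proof.
move: t d; apply: (@ptree_rect2 (fun t => forall d, all (leq d) (tdep t d))
   (fun ts => forall d, all (leq d) (fdep d ts))).
- by [].
- by move=> t ts IHt IHts d; rewrite /fdep /= all_cat IHt -/(fdep _ _) IHts.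
- move=> ts IH d; rewrite tdepE /= leqnn /=.
  apply: sub_all (IH d.+1) => x; exact: ltnW.
Qed.

Lemma fdep_ge f d : all (leq d) (fdep d f).
Proof. by elim: f => //= t f IH; rewrite all_cat tdep_ge IH. Qed.

Lemma fdep_head f d y r : fdep d f = y :: r -> y = d.
Proof. by case: f => //= -[ch] f /= [<-]. Qed.

Lemma split_eq d X Y X' Y' : all (leq d.+1) X -> all (leq d.+1) X' ->
  (forall y r, Y = y :: r -> y = d) -> (forall y r, Y' = y :: r -> y = d) ->
  X ++ Y = X' ++ Y' -> X = X'.
Proof.
elim: X X' => [|x X IH] [|x' X'] //=.
- move=> _ /andP [Hx' _] HY _ E; move: (HY _ _ E) Hx' => ->; by rewrite ltnn.
- move=> /andP [Hx _] _ _ HY' E; move: (HY' _ _ (esym E)) Hx => ->; by rewrite ltnn.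
- move=> /andP [_ HX] /andP [_ HX'] HY HY' [-> E]; congr (_ :: _); exact: IH E.
Qed.

Lemma catIs (T : Type) (s a b : seq T) : s ++ a = s ++ b -> a = b.
Proof. by elim: s => //= x s IH [/IH]. Qed.

Lemma fdep_inj n d f g : size (fdep d f) <= n -> fdep d f = fdep d g -> f = g.
Proof.
elim: n d f g => [|n IH] d [|[a] f] [|[b] g] //=;
  rewrite /fdep /= ?size_cat //= -/(fdep _ _) //.
move=> Hn [E].
have Ea := split_eq (fdep_ge a d.+1) (fdep_ge b d.+1)
   (@fdep_head f d) (@fdep_head g d) E.
rewrite Ea in E.
rewrite ltnS in Hn.
congr (PNode _ :: _).
- apply: (IH d.+1) Ea; apply: leq_trans Hn; exact: leq_addr.
- apply: (IH d) (catIs E); apply: leq_trans Hn; exact: leq_addl.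
Qed.

Unset Implicit Arguments. Set Strict Implicit.

Theorem mainTheorem6 (K : fieldType) (hK : [pchar K]%R =i pred0)
  (fs : seq pforest) (c : seq K)
  (hc : size c = size fs)
  (hdist : forall i j, (i < j)%N -> (j < size fs)%N -> nth [::] fs i <> nth [::] fs j)
  (h0 : forall w : seq nat,
      (\sum_(i < size fs) (c`_i * piota K (nth [::] fs i) w))%R = 0%R) :
  forall i, (i < size fs)%N -> nth 0%R c i = 0%R.
Proof.
move=> i Hi.
case: (eqVneq (nth 0%R c i) 0%R) => // Hci; exfalso.
pose P (j : 'I_(size fs)) := nth 0%R c j != 0%R.
pose M (j : 'I_(size fs)) := sumn (Df (nth [::] fs j)).
have Pi0 : P (Ordinal Hi) by [].
case: (arg_minnP M Pi0) => j Pj Hmin.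
have := h0 (wf (nth [::] fs j)).
rewrite (bigD1 j) //= piota_self GRing.mulr1 big1 ?GRing.addr0; first by apply/eqP.
move=> k Hkj.
case: (eqVneq (nth 0%R c k) 0%R) => [->|Hck]; first by rewrite GRing.mul0r.
rewrite /piota; case: ifP => [H|]; last by rewrite GRing.mulr0.
exfalso; case/and4P: H => _ Hsz _ Hinc.
rewrite pack_wf in Hinc.
have Hs : size (Df (nth [::] fs k)) = size (Df (nth [::] fs j)).
  by move/eqP: Hsz; rewrite size_map /Df !size_fdep.
have Hd := dominate Hs Hinc.
have Heq : Df (nth [::] fs k) = Df (nth [::] fs j).
  apply: sumn_eq => //; first by rewrite Hs.
  exact: (Hmin k Hck).
have Hf := fdep_inj (leqnn _) Heq.
case: (ltngtP k j) => Hkj'.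
- exact: hdist _ _ Hkj' (ltn_ord j) Hf.
- exact: hdist _ _ Hkj' (ltn_ord k) (esym Hf).
- by move: Hkj; rewrite -(inj_eq val_inj) /= Hkj' eqxx.
Qed.
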